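(* Let $N\ge 3$ and let $\mathcal{X}\in\mathbb{R}^{I_1\times\cdots\times I_N}$ be a tensor (noiseless) with TT rank $(R_0,R_1,\ldots,R_N)$, $R_0=R_N=1$, where $R_n=\operatorname{rank}(\mathbf{X}_{[1,\ldots,n;n+1,\ldots,N]})$ for $1\le n\le N-1$. Suppose $\mathcal{X}$ is observed only through a set of mode-$N$ fibers: there is a set $\Omega\subseteq[I_1]\times\cdots\times[I_{N-1}]$ such that the fibers $\mathcal{X}(i_1,\ldots,i_{N-1},:)$ are known exactly for $(i_1,\ldots,i_{N-1})\in\Omega$ and nothing else is known. Assume: (i)–(ii) for every $n\in\{1,\ldots,N-2\}$ there is a collection of observed submatrices $\mathbf{M}^{(n,l)}_{obs}=\mathbf{S}_r^{(n,l)}\tilde{\mathbf{X}}^{(n)}_{:p_l:}$, $l=1,\ldots,L_n$ (lateral slices $p_l$ of the reshaping $\tilde{\mathcal{X}}^{(n)}=\mathcal{X}_{[1,\ldots,n;n+1,\ldots,N-1;N]}$ restricted to their observed rows, with row index sets $\alpha_l\subseteq[I_1\cdots I_n]$), each of which is isorank, i.e. $\operatorname{rank}(\mathbf{M}^{(n,l)}_{obs})=R_n$, and such that the matrix $\mathbf{N}^{(n)}=[\mathbf{S}_r^{(n,1)\top}\mathbf{N}^{(n,1)}_{obs},\ldots,\mathbf{S}_r^{(n,L_n)\top}\mathbf{N}^{(n,L_n)}_{obs}]$ satisfies $\dim\ker(\mathbf{N}^{(n)\top})=R_n$, where the columns of $\mathbf{N}^{(n,l)}_{obs}\in\mathbb{R}^{|\alpha_l|\times(|\alpha_l|-R_n)}$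 form a basis of the orthogonal complement of the column space of $\mathbf{M}^{(n,l)}_{obs}$; (iii) for every $i\in\{1,\ldots,I_{N-1}\}$, letting $\mathbf{S}_r^{(i)}$ be the row selection matrix of the observed rows of the $i$-th lateral slice $\tilde{\mathbf{X}}_{:i:}\in\mathbb{R}^{(I_1\cdots I_{N-2})\times I_N}$ of $\tilde{\mathcal{X}}=\mathcal{X}_{[1,\ldots,N-2;N-1;N]}$, the matrix $\mathbf{S}_r^{(i)}\mathbf{U}$ has full column rank $R_{N-2}$, where $\mathbf{U}$ is any matrix whose columns form a basis of the column space of $\mathbf{X}_{[1,\ldots,N-2;N-1,N]}$; (iv) $\operatorname{rank}(\mathbf{S}_r\mathbf{X}_{[1,\ldots,N-1;N]})\ge R_{N-1}$, where $\mathbf{S}_r$ selects the rows of the $(N-1)$th unfolding corresponding to $\Omega$. Then the cores $\mathcal{G}^{(1)},\ldots,\mathcal{G}^{(N)}$ produced by the procedure described in the context are well defined (all linear systems have unique solutions) and satisfy $\mathcal{X}=\mathcal{G}^{(1)}\bullet\mathcal{G}^{(2)}\bullet\cdots\bullet\mathcal{G}^{(N)}$ exactly.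
   Context: TT decomposition: $\mathcal{X}=\mathcal{G}^{(1)}\bullet\cdots\bullet\mathcal{G}^{(N)}$ with cores $\mathcal{G}^{(n)}\in\mathbb{R}^{R_{n-1}\times I_n\times R_n}$, meaning $x_{i_1\cdots i_N}=\mathbf{G}^{(1)}_{:i_1:}\mathbf{G}^{(2)}_{:i_2:}\cdots\mathbf{G}^{(N)}_{:i_N:}$; $\bullet$ contracts the last mode of the left tensor with the first mode of the right one. $\mathbf{X}_{[1,\ldots,n;n+1,\ldots,N]}\in\mathbb{R}^{I_1\cdots I_n\times I_{n+1}\cdots I_N}$ is the unfolding whose rows are indexed by $(i_1,\ldots,i_n)$ and columns by $(i_{n+1},\ldots,i_N)$ (a fixed consistent ordering of multi-indices is used throughout); $\mathcal{X}_{[1,\ldots,n;n+1,\ldots,N-1;N]}$ is the third-order reshaping with modes indexed by $(i_1,\ldots,i_n)$, $(i_{n+1},\ldots,i_{N-1})$, $i_N$; its lateral slices are the matrices $\tilde{\mathbf{X}}_{:p:}$ obtained by fixing the middle index, so the $n$th unfolding is the horizontal concatenation of these slices. For a slice, a row $(i_1,\ldots,i_n)$ of $\tilde{\mathbf{X}}_{:p:}$ is observed iff the full index $(i_1,\ldots,i_{N-1})$ (with $(i_{n+1},\ldots,i_{N-1})$ given by $p$) lies in $\Omega$; a row selection matrix $\mathbf{S}_r\in\{0,1\}^{|\alpha|\times J}$ has rows $\mathbf{e}_j^\top$, $j\in\alpha$, so $\mathbf{S}_r^\top$ zero-pads. Procedure (TT mode-$N$ fiber-wise): (1) For $n=1,\ldots,N-2$: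 let $\mathbf{A}^{(n)}\in\mathbb{R}^{I_1\cdots I_n\times R_n}$ have orthonormal columns spanning $\ker(\mathbf{N}^{(n)\top})$ (subspace constraint method; equivalently, the first $R_n$ left singular vectors of $[\mathbf{Q}_{S_1},\ldots,\mathbf{Q}_{S_{L_n}}]$, where $\mathbf{Q}_{S_l}=[\mathbf{S}_r^{(n,l)\top}\mathbf{U}_l\ \ \tilde{\mathbf{S}}_r^{(n,l)\top}]$, $\mathbf{U}_l$ holds the top $R_n$ left singular vectors of $\mathbf{M}^{(n,l)}_{obs}$ and $\tilde{\mathbf{S}}_r^{(n,l)}$ selects the unobserved rows — subspace intersection method). (2) $\mathcal{G}^{(1)}=\mathbf{A}^{(1)}$ reshaped to $1\times I_1\times R_1$. (3) For $n=1,\ldots,N-3$: $\mathbf{W}^{(n)}=\mathbf{A}^{(n)\top}\mathbf{B}^{(n+1)}$, where $\mathbf{B}^{(n+1)}\in\mathbb{R}^{I_1\cdots I_n\times I_{n+1}R_{n+1}}$ is $\mathbf{A}^{(n+1)}$ reshaped so that rows are indexed by $(i_1,\ldots,i_n)$ and columns by $(i_{n+1},r)$; set $\mathcal{G}^{(n+1)}(r',i_{n+1},r)=\mathbf{W}^{(n)}(r',(i_{n+1},r))$. (4) Let $\mathbf{V}^{(N-1)}$ hold the top $R_{N-1}$ right singular vectors of $\mathbf{S}_r\mathbf{X}_{[1,\ldots,N-1;N]}$ and set $\mathcal{G}^{(N)}=\mathbf{V}^{(N-1)\top}$ reshaped to $R_{N-1}\times I_N\times 1$. (5) Let $\mathbf{G}^{(<N-1)}\in\mathbb{R}^{I_1\cdots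 I_{N-2}\times R_{N-2}}$ be the matrix form of $\mathcal{G}^{(1)}\bullet\cdots\bullet\mathcal{G}^{(N-2)}$ and $\mathbf{G}^{(N)}\in\mathbb{R}^{R_{N-1}\times I_N}$ the matrix form of $\mathcal{G}^{(N)}$; for each $i\in\{1,\ldots,I_{N-1}\}$ obtain the slice $\mathbf{G}^{(N-1)}_{:i:}\in\mathbb{R}^{R_{N-2}\times R_{N-1}}$ by solving $\mathbf{S}_r^{(i)}(\tilde{\mathbf{X}}_{:i:}\mathbf{G}^{(N)\top})=(\mathbf{S}_r^{(i)}\mathbf{G}^{(<N-1)})\mathbf{G}^{(N-1)}_{:i:}$. *)

(* Defs.v *)
From HB Require Import structures.
From mathcomp Require Import all_boot all_order all_algebra.
From mathcomp Require Import reals.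
Set Implicit Arguments.
Unset Strict Implicit.
Unset Printing Implicit Defensive.
Import Order.TTheory GRing.Theory Num.Theory.
Local Open Scope ring_scope.

(* Conventions: modes are 0-based in Rocq: mode k (0 <= k < N) is the
   paper's mode k+1, of size I k.  Multi-indices are encoded little-endian
   ("first index fastest"): (i_1,...,i_N) |-> \sum_k i_k * P k. *)

Definition P (I : nat -> nat) (n : nat) : nat := (\prod_(k < n) I k)%N.
Definition Q (I : nat -> nat) (N n : nat) : nat := (\prod_(n <= k < N) I k)%N.
(* product of sizes of modes n+1..N-1 (paper): middle mode of the
   third-order reshaping X_[1..n; n+1..N-1; N] *)
Definition Mid (I : nat -> nat) (N n : nat) : nat := (\prod_(n <= k < N.-1) I k)%N.

Definition flat (I : nat -> nat) (n : nat) (idx : nat -> nat) : nat :=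
  (\sum_(j < n) idx j * P I j)%N.
Definition digit (I : nat -> nat) (r j : nat) : nat := ((r %/ P I j) %% I j)%N.

(* nat-indexed access to a matrix entry (0 outside the range) *)
Definition mxn {R : nzRingType} {m n : nat} (M : 'M[R]_(m, n)) (i j : nat) : R :=
  match insub i, insub j with
  | Some i', Some j' => M i' j'
  | _, _ => 0
  end.

Definition tensor (R : Type) (I : nat -> nat) (N : nat) := 'I_(P I N) -> R.

Definition tget {R : nzRingType} {I N} (X : tensor R I N) (k : nat) : R :=
  match insub k with Some k' => X k' | None => 0 end.

Definition unfold {R : nzRingType} {I N} (X : tensor R I N) (n : nat)
  : 'M[R]_(P I n, Q I N n) :=
  \matrix_(i, j) tget X (i + P I n * j)%N.

Definition ttrank {R : fieldType} {I N} (X : tensor R I N) (n : nat) : nat :=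
  \rank (unfold X n).

(* lateral slice p of the reshaping X_[1..n; n+1..N-1; N]:
   rows (i_1..i_n), columns i_N (the column count Q I N N.-1 is the
   product over the single last mode, i.e. I_N) *)
Definition slice {R : nzRingType} {I N} (X : tensor R I N) (n p : nat)
  : 'M[R]_(P I n, Q I N N.-1) :=
  \matrix_(r, c) tget X (r + P I n * p + P I N.-1 * c)%N.

(* Omega is a set of (flat) indices (i_1,...,i_{N-1}).
   Observed rows of slice p at level n: rows r such that the full index
   (r, p) of the first N-1 modes lies in Omega. *)
Definition obs {I : nat -> nat} {N : nat} (Om : {set 'I_(P I N.-1)}) (n p : nat)
  : {set 'I_(P I n)} :=
  [set r : 'I_(P I n) | [exists x in Om, val x == (r + P I n * p)%N]].

Definition rowsel {R : nzRingType} {m : nat} (A : {set 'I_m}) : 'M[R]_(#|A|, m) :=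
  \matrix_(i, j) (enum_val i == j)%:R.

Definition Mobs {R : nzRingType} {I N} (X : tensor R I N) (Om : {set 'I_(P I N.-1)})
  (n p : nat) : 'M[R]_(#|obs Om n p|, Q I N N.-1) :=
  rowsel (obs Om n p) *m slice X n p.

Definition Nmat {R : nzRingType} {I N} (Om : {set 'I_(P I N.-1)}) (n : nat) (rn : nat)
  (ps : seq nat)
  (Nobs : forall p : nat, 'M[R]_(#|obs Om n p|, #|obs Om n p| - rn)) :=
  \mxrow_(l < size ps) ((rowsel (obs Om n (nth 0%N ps l)))^T *m Nobs (nth 0%N ps l)).

Definition top_rsv {R : realType} {m n : nat} (M : 'M[R]_(m, n)) (r : nat)
  (V : 'M[R]_(n, r)) : Prop :=
  (r <= n)%N /\
  exists (U : 'M[R]_m) (W : 'M[R]_n) (s : nat -> R),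
    U^T *m U = 1%:M /\ W^T *m W = 1%:M /\
    (forall k, 0 <= s k) /\ (forall k, s k.+1 <= s k) /\
    M = U *m (\matrix_(i < m, j < n) if (i == j :> nat) then s i else 0) *m W^T /\
    (forall (i : 'I_n) (j : 'I_r), V i j = mxn W i j).

(* Step (3): slice i of the core G^(n+1) (n >= 1): A^(n)^T B^(n+1) where
   B^(n+1)(r, (i, s)) = A^(n+1)((r, i), s). *)
Definition Gmid {R : nzRingType} {I : nat -> nat} {rk : nat -> nat}
  (A : forall n, 'M[R]_(P I n, rk n)) (n i : nat) : 'M[R]_(rk n, rk n.+1) :=
  (A n)^T *m \matrix_(r < P I n, s < rk n.+1) mxn (A n.+1) (r + P I n * i)%N s.

(* row vector G^(1)_{:d0:} G^(2)_{:d1:} ... G^(k+1)_{:dk:} *)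
Fixpoint pre {R : nzRingType} {I : nat -> nat} {rk : nat -> nat}
  (A : forall n, 'M[R]_(P I n, rk n)) (d : nat -> nat) (k : nat)
  : 'M[R]_(1, rk k.+1) :=
  match k with
  | 0 => \row_s mxn (A 1%N) (d 0%N) s
  | k'.+1 => pre A d k' *m Gmid A k'.+1 (d k'.+1)
  end.

(* G^(<N-1): matrix form of G^(1) . ... . G^(N-2), rows (i_1..i_{N-2}) *)
Definition Gpre {R : nzRingType} {I : nat -> nat} {rk : nat -> nat} (N : nat)
  (A : forall n, 'M[R]_(P I n, rk n)) : 'M[R]_(P I (N - 2)%N, rk (N - 2)%N) :=
  \matrix_(r, s) mxn (pre A (digit I r) (N - 3)%N) 0%N s.

Arguments mxn {R m n} M i j.
Arguments tget {R I N} X k.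
Arguments unfold {R I N} X n.
Arguments ttrank {R I N} X n.
Arguments slice {R I N} X n p.
Arguments obs {I N} Om n p.
Arguments rowsel {R m} A.
Arguments Mobs {R I N} X Om n p.
Arguments Nmat {R I N} Om n rn ps Nobs.
Arguments top_rsv {R m n} M r V.
Arguments Gmid {R I rk} A n i.
Arguments pre {R I rk} A d k.
Arguments Gpre {R I rk} N A.

(* Main.v *)
Require Import Defs.
From HB Require Import structures.
From mathcomp Require Import all_boot all_order all_algebra.
From mathcomp Require Import reals.
From mathcomp Require Import zify ring lra.
Set Implicit Arguments. Unset Strict Implicit. Unset Printing Implicit Defensive.
Import Order.TTheory GRing.Theory Num.Theory.
Local Open Scope ring_scope.

Lemma mxnE (R : nzRingType) m n (M : 'M[R]_(m,n)) i j (hi : (i < m)%N) (hj : (j < n)%N) :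
  mxn M i j = M (Ordinal hi) (Ordinal hj).
Proof.
rewrite /mxn; case: insubP => [i' _ ei|]; last by rewrite hi.
case: insubP => [j' _ ej|]; last by rewrite hj.
by congr (M _ _); apply: val_inj.
Qed.

Lemma mxn_ord (R : nzRingType) m n (M : 'M[R]_(m,n)) (i : 'I_m) (j : 'I_n) :
  mxn M i j = M i j.
Proof. rewrite (mxnE M (ltn_ord i) (ltn_ord j)); congr (M _ _); exact: val_inj. Qed.

Lemma mxn_oob (R : nzRingType) m n (M : 'M[R]_(m,n)) i j :
  ((m <= i) || (n <= j))%N -> mxn M i j = 0.
Proof.
rewrite /mxn; case: insubP => [i' hi _|//]; case: insubP => [j' hj _|//].
by rewrite leqNgt hi leqNgt hj.
Qed.

Lemma sum_delta (R : nzRingType) n (i : nat) (F : nat -> R) :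
  \sum_(b < n) (i == b :> nat)%:R * F b = if (i < n)%N then F i else 0.
Proof.
case: ifP => hi.
  rewrite (bigD1 (Ordinal hi)) //= eqxx mul1r big1 ?addr0 // => b hb.
  have -> : (i == b :> nat) = false.
    by apply/negbTE; apply: contra hb => /eqP e; apply/eqP/val_inj.
  by rewrite mul0r.
rewrite big1 // => b _; have -> : (i == b :> nat) = false.
  by apply/negbTE/eqP => e; move: hi; rewrite e ltn_ord.
by rewrite mul0r.
Qed.

Lemma sum_delta_r (R : nzRingType) n (i : nat) (F : nat -> R) :
  \sum_(b < n) F b * (b == i :> nat)%:R = if (i < n)%N then F i else 0.
Proof.
rewrite -sum_delta; apply: eq_bigr => b _; rewrite eq_sym.
by case: (i == b :> nat); rewrite ?mulr1 ?mul1r ?mulr0 ?mul0r.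
Qed.

Lemma sel_col (F : fieldType) a b b' (M : 'M[F]_(a,b)) (M' : 'M[F]_(a,b'))
  (f : 'I_b' -> 'I_b) : (forall i c, M' i c = M i (f c)) -> (M'^T <= M^T)%MS.
Proof.
move=> hf.
have -> : M' = M *m \matrix_(j, c) (j == f c)%:R.
  apply/matrixP => i c; rewrite !mxE hf (bigD1 (f c)) //= mxE eqxx mulr1.
  by rewrite big1 ?addr0 // => j /negbTE hj; rewrite mxE hj mulr0.
by rewrite trmx_mul submxMl.
Qed.

Lemma sel_row (F : fieldType) a a' b (M : 'M[F]_(a,b)) (M' : 'M[F]_(a',b))
  (f : 'I_a' -> 'I_a) : (forall i c, M' i c = M (f i) c) -> (M' <= M)%MS.
Proof.
move=> hf.
have -> : M' = \matrix_(i, j) (f i == j)%:R *m M.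
  apply/matrixP => i c; rewrite !mxE hf (bigD1 (f i)) //= mxE eqxx mul1r.
  by rewrite big1 ?addr0 // => j hj; rewrite mxE eq_sym (negbTE hj) mul0r.
exact: submxMl.
Qed.

Lemma colspan (F : fieldType) k m p q (S : 'M[F]_(k,m)) (U : 'M[F]_(m,p))
  (Sl : 'M[F]_(m,q)) : (Sl^T <= U^T)%MS -> \rank (S *m Sl) = \rank U ->
  ((S *m U)^T <= (S *m Sl)^T)%MS.
Proof.
case/submxP => D hD hr.
have eSl : Sl = U *m D^T by rewrite -[Sl]trmxK hD trmx_mul trmxK.
have e2 : (S *m Sl)^T = D *m (S *m U)^T by rewrite eSl mulmxA trmx_mul trmxK.
rewrite e2 -(mxrank_leqif_sup (submxMl D (S *m U)^T)).2.
rewrite -e2 !mxrank_tr eqn_leq; apply/andP; split.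
  have -> : S *m Sl = S *m U *m D^T by rewrite eSl mulmxA.
  exact: mxrankM_maxl.
by rewrite hr; exact: mxrankM_maxr.
Qed.

Lemma AAt (F : fieldType) m r q (A : 'M[F]_(m,r)) (B : 'M[F]_(m,q)) :
  A^T *m A = 1%:M -> (B^T <= A^T)%MS -> A *m (A^T *m B) = B.
Proof.
move=> hA /submxP [D hD].
have eB : B = A *m D^T by rewrite -[B]trmxK hD trmx_mul trmxK.
by rewrite eB (mulmxA A^T) hA mul1mx.
Qed.

Lemma svd_sub (R : realType) m n r (M : 'M[R]_(m,n)) (V : 'M[R]_(n,r)) :
  top_rsv M r V -> \rank M = r -> (M <= V^T)%MS /\ V^T *m V = 1%:M.
Proof.
case=> hrn [U [W [s [hU [hW [hs0 [hsd [hM hV]]]]]]]] hrank.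
set D := \matrix_(i < m, j < n) _ in hM.
have mono : forall a b, (a <= b)%N -> s b <= s a.
  move=> a b hab; rewrite -(subnK hab); elim: (b - a)%N => [|k IH] //=.
  by rewrite addSn; exact: le_trans (hsd _) IH.
have hsz : forall i, (r <= i)%N -> (i < m)%N -> (i < n)%N -> s i = 0.
  move=> i0 hri him hin.
  have sr0 : s r = 0.
    apply/eqP; apply/negP => /negP hsr.
    have hrm : (r < m)%N by exact: leq_ltn_trans hri him.
    have hrn0 : (r < n)%N by exact: leq_ltn_trans hri hin.
    have hD : D = U^T *m M *m W.
      by rewrite hM !mulmxA hU mul1mx -mulmxA hW mulmx1.
    have rD : (\rank D <= r)%N.
      rewrite hD -hrank; apply: leq_trans (mxrankM_maxl _ _) _; exact: mxrankM_maxr.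
    pose Pt : 'M[R]_(r.+1, m) := \matrix_(i, j) (i == j :> nat)%:R.
    pose Pl : 'M[R]_(n, r.+1) := \matrix_(i, j) (i == j :> nat)%:R.
    have e : Pt *m D *m Pl = diag_mx (\row_(i < r.+1) s i).
      apply/matrixP => i j; rewrite !mxE.
      have inner : forall b : 'I_n, \sum_a Pt i a * D a b = if i == b :> nat then s i else 0.
        move=> b.
        rewrite (eq_bigr (fun a : 'I_m => (i == a :> nat)%:R * (fun a' : nat => if a' == b :> nat then s a' else 0) a)); last by move=> a _; rewrite !mxE.
        by rewrite (sum_delta _ _ (fun a' : nat => if a' == b :> nat then s a' else 0)) (leq_trans (ltn_ord i) hrm).
      rewrite (eq_bigr (fun b : 'I_n => (fun b' : nat => if i == b' :> nat then s i else 0) b * (b == j :> nat)%:R)); last by move=> b _; rewrite [(Pt *m D) _ _]mxE inner mxE.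
      rewrite (sum_delta_r _ _ (fun b' : nat => if i == b' :> nat then s i else 0)) (leq_trans (ltn_ord j) hrn0).
      case: (i =P j) => [->|h]; first by rewrite eqxx mulr1n.
      have h' : (i == j :> nat) = false by apply/eqP => e; apply: h; exact: val_inj.
      by rewrite h' mulr0n.
    have hsr' : 0 < s r by rewrite lt_def hsr hs0.
    have u : diag_mx (\row_(i < r.+1) s i) \in unitmx.
      rewrite unitmxE det_diag unitfE; apply/prodf_neq0 => i _; rewrite mxE.
      by rewrite gt_eqF // (lt_le_trans hsr') // mono // -ltnS.
    have : (r.+1 <= \rank D)%N.
      rewrite -{1}(mxrank_unit u) -e; apply: leq_trans (mxrankM_maxl _ _) _; exact: mxrankM_maxr.
    by move: rD; clear; lia.
  by apply/eqP; rewrite eq_le hs0 andbT -sr0; exact: mono.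
pose D2 : 'M[R]_(m, r) := \matrix_(i, j) if i == j :> nat then s i else 0.
have eD : D *m W^T = D2 *m V^T.
  apply/matrixP => i c; rewrite !mxE.
  rewrite (eq_bigr (fun b : 'I_n => (i == b :> nat)%:R * (fun b' : nat => s i * mxn W c b') b)); last first.
    by move=> b _; rewrite !mxE mxn_ord; case: eqP => [->|]; rewrite ?mul1r ?mul0r.
  rewrite [RHS](eq_bigr (fun b : 'I_r => (i == b :> nat)%:R * (fun b' : nat => s i * mxn W c b') b)); last first.
    by move=> b _; rewrite !mxE hV; case: eqP => [->|]; rewrite ?mul1r ?mul0r.
  rewrite !(sum_delta _ _ (fun b' : nat => s i * mxn W c b')); case: (ltnP i r) => hir; first by rewrite (leq_trans hir hrn).
  by case: ifP => // hin; rewrite hsz // mul0r.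
split; first by rewrite hM -mulmxA eD mulmxA submxMl.
apply/matrixP => i j; rewrite !mxE.
have hW' := congr1 (fun Z : 'M[R]_n => Z (widen_ord hrn i) (widen_ord hrn j)) hW.
move: hW'; rewrite /= !mxE => <-.
apply: eq_bigr => k _; rewrite !mxE !hV.
by rewrite (mxnE W (ltn_ord k) (leq_trans (ltn_ord i) hrn)) (mxnE W (ltn_ord k) (leq_trans (ltn_ord j) hrn)); congr (_ * _); congr (W _ _); apply: val_inj.
Qed.

Lemma P_S I n : P I n.+1 = (P I n * I n)%N.
Proof. by rewrite /P big_ord_recr. Qed.

Lemma P_0 I : P I 0 = 1%N.
Proof. by rewrite /P big_ord0. Qed.

Lemma P_nat I n : P I n = (\prod_(0 <= k < n) I k)%N.
Proof. by rewrite /P big_mkord. Qed.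

Lemma P_Mid I N n : (n <= N.-1)%N -> (P I n * Mid I N n)%N = P I N.-1.
Proof. by move=> h; rewrite !P_nat /Mid -big_cat_nat. Qed.

Lemma P_Q I N n : (n <= N)%N -> (P I n * Q I N n)%N = P I N.
Proof. by move=> h; rewrite !P_nat /Q -big_cat_nat. Qed.

Lemma Q_S I N n : (n < N)%N -> Q I N n = (I n * Q I N n.+1)%N.
Proof. by move=> h; rewrite /Q big_ltn. Qed.

Lemma Q_Mid I N n : (0 < N)%N -> (n <= N.-1)%N -> Q I N n = (Mid I N n * I N.-1)%N.
Proof.
move=> hN h; rewrite /Q /Mid; case: N hN h => [|N'] // _ h /=.
by rewrite (@big_cat_nat _ _ _ N') //= big_nat1.
Qed.

Lemma Q_last I N : (0 < N)%N -> Q I N N.-1 = I N.-1.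
Proof. by case: N => // N' _; rewrite /Q /= big_nat1. Qed.

Lemma flat_S I n d : flat I n.+1 d = (flat I n d + d n * P I n)%N.
Proof. by rewrite /flat big_ord_recr. Qed.

Lemma flat_lt I n d : (forall j, (j < n)%N -> (d j < I j)%N) -> (flat I n d < P I n)%N.
Proof.
elim: n => [|n IH] h; first by rewrite /flat big_ord0 P_0.
rewrite flat_S P_S.
have h1 := IH (fun j hj => h j (ltnW hj)).
have h2 := h n (ltnSn n).
by nia.
Qed.

Lemma flat_digit I n r : (0 < P I n)%N -> flat I n (digit I r) = (r %% P I n)%N.
Proof.
elim: n => [|n IH] h; first by rewrite /flat big_ord0 P_0 modn1.
move: h; rewrite P_S muln_gt0 => /andP [hP hI].
rewrite flat_S IH // /digit.
set q := (r %/ P I n)%N.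
have e1 := divn_eq r (P I n).
have e2 := divn_eq q (I n).
have l1 := ltn_pmod r hP.
have l2 := ltn_pmod q hI.
have er : r = ((q %/ I n) * (P I n * I n) + ((q %% I n) * P I n + r %% P I n))%N.
  rewrite {1}e1 -/q {1}e2; ring.
rewrite -/q [in RHS]er modnMDl (@modn_small (q %% I n * P I n + r %% P I n)); first by rewrite addnC.
move: l1 l2; generalize (q %% I n)%N (r %% P I n)%N => a b l1 l2.
have := leq_mul l2 (leqnn (P I n)); rewrite mulSn => h3.
by lia.
Qed.

Lemma slice_sub (R : fieldType) I N (X : tensor R I N) n p :
  (0 < N)%N -> (n <= N.-1)%N -> (p < Mid I N n)%N ->
  ((slice X n p)^T <= (unfold X n)^T)%MS.
Proof.
move=> hN hn hp.
have hb : forall c : 'I_(Q I N N.-1), (p + Mid I N n * c < Q I N n)%N.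
  case=> c hc /=; move: hc; rewrite Q_last // Q_Mid // => hc.
  have := leq_mul (leqnn (Mid I N n)) hc; rewrite mulnS; lia.
apply: (@sel_col _ _ _ _ _ _ (fun c => Ordinal (hb c))) => r c; rewrite !mxE /=.
congr (tget X _); rewrite mulnDr mulnA P_Mid //; lia.
Qed.

Lemma slice_row (R : fieldType) I N (X : tensor R I N) n p :
  (n <= N.-1)%N -> (p < Mid I N n)%N ->
  (slice X n p <= unfold X N.-1)%MS.
Proof.
move=> hn hp.
have hb : forall r : 'I_(P I n), (r + P I n * p < P I N.-1)%N.
  move=> r; rewrite -(P_Mid I hn); have := leq_mul (leqnn (P I n)) hp; rewrite mulnS.
  have := ltn_ord r; lia.
apply: (@sel_row _ _ _ _ _ _ (fun r => Ordinal (hb r))) => r c; rewrite !mxE /=.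
by congr (tget X _).
Qed.

Lemma B_sub (R : fieldType) I N (X : tensor R I N) n i c (A' : 'M[R]_(P I n.+1, c)) :
  (n.+1 < N)%N -> (i < I n)%N -> (A'^T <= (unfold X n.+1)^T)%MS ->
  ((\matrix_(r < P I n, s < c) mxn A' (r + P I n * i) s)^T <= (unfold X n)^T)%MS.
Proof.
move=> hn hi /submxP [D hD].
have eA : A' = unfold X n.+1 *m D^T by rewrite -[A']trmxK hD trmx_mul trmxK.
have bound : forall r : 'I_(P I n), (r + P I n * i < P I n.+1)%N.
  move=> r; rewrite P_S; have := leq_mul (leqnn (P I n)) hi; rewrite mulnS.
  have := ltn_ord r; lia.
pose U' := \matrix_(r < P I n, j < Q I N n.+1) (unfold X n.+1) (Ordinal (bound r)) j.
have -> : \matrix_(r < P I n, s < c) mxn A' (r + P I n * i) s = U' *m D^T.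
  apply/matrixP => r s; rewrite !mxE (mxnE A' (bound r) (ltn_ord s)) eA !mxE.
  by apply: eq_bigr => j _; rewrite [U' _ _]mxE; congr (_ * _); congr (D^T _ _); apply: val_inj.
rewrite trmx_mul; apply: submx_trans (submxMl _ _) _.
have bound2 : forall j : 'I_(Q I N n.+1), (i + I n * j < Q I N n)%N.
  move=> j; rewrite (Q_S _ (ltnW hn)); have := leq_mul (leqnn (I n)) (ltn_ord j).
  rewrite mulnS; lia.
apply: (@sel_col _ _ _ _ _ _ (fun j => Ordinal (bound2 j))) => r j; rewrite !mxE /=.
congr (tget X _); rewrite P_S; ring.
Qed.

Lemma mxn_row (R : nzRingType) m n (M : 'M[R]_(m, n)) i (hi : (i < m)%N) :
  \row_s mxn M i s = row (Ordinal hi) M.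
Proof.
apply/rowP => s; rewrite !mxE (mxnE M hi (ltn_ord s)); congr (M _ _); exact: val_inj.
Qed.

Lemma pre_row (R : fieldType) I rk (A : forall n, 'M[R]_(P I n, rk n)) (Kmax : nat)
  (hAA : forall n, (1 <= n <= Kmax)%N -> (A n)^T *m A n = 1%:M)
  (hB : forall n i, (1 <= n)%N -> (n.+1 <= Kmax)%N -> (i < I n)%N ->
     ((\matrix_(r < P I n, s < rk n.+1) mxn (A n.+1) (r + P I n * i) s)^T <= (A n)^T)%MS) :
  forall k, (k.+1 <= Kmax)%N -> forall d, (forall j, (j <= k)%N -> (d j < I j)%N) ->
  pre A d k = \row_s mxn (A k.+1) (flat I k.+1 d) s.
Proof.
elim=> [|k IH] hk d hd.
  by rewrite /= flat_S /flat big_ord0 P_0 muln1 add0n.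
rewrite /= (IH (ltnW hk) d (fun j hj => hd j (leqW hj))).
have hf : (flat I k.+1 d < P I k.+1)%N.
  by apply: flat_lt => j hj; apply: hd; exact: ltnW.
rewrite (mxn_row _ hf) -row_mul /Gmid AAt; first last.
- by apply: hB => //; apply: hd.
- by apply: hAA; rewrite ltnS (ltnW hk).
apply/rowP => s; rewrite !mxE (flat_S _ k.+1) mulnC.
done.
Qed.

Lemma P_pos_I I n j : (0 < P I n)%N -> (j < n)%N -> (0 < I j)%N.
Proof.
move=> h hj; move: h; rewrite /P (bigD1 (Ordinal hj)) //= muln_gt0.
by case/andP.
Qed.

Lemma Gpre_A (R : fieldType) I rk (A : forall n, 'M[R]_(P I n, rk n)) (K : nat)
  (hpre : forall d, (forall j, (j <= K)%N -> (d j < I j)%N) ->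
     pre A d K = \row_s mxn (A K.+1) (flat I K.+1 d) s) :
  Gpre K.+3 A = A K.+1.
Proof.
apply/matrixP => r s; rewrite mxE /=.
have hP : (0 < P I K.+1)%N := leq_ltn_trans (leq0n _) (ltn_ord r).
have -> : (K.+3 - 3)%N = K by lia.
rewrite hpre; last first.
  move=> j hj; rewrite /digit ltn_pmod //; exact: (P_pos_I hP).
rewrite (mxnE _ (ltn0Sn 0) (ltn_ord s)) mxE flat_digit // modn_small //.
by rewrite (mxn_ord (A K.+1) r (Ordinal (ltn_ord s))); congr (A _ _ _); apply: val_inj.
Qed.

Lemma mxn_col (R : nzRingType) m n (M : 'M[R]_(m, n)) j (hj : (j < n)%N) :
  \col_s mxn M s j = col (Ordinal hj) M.
Proof.
apply/colP => s; rewrite !mxE (mxnE M (ltn_ord s) hj); congr (M _ _); exact: val_inj.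
Qed.

Lemma row_col_entry (R : nzRingType) m n p (M : 'M[R]_(m, n)) (M' : 'M[R]_(n, p)) i j :
  (row i M *m col j M') 0 0 = (M *m M') i j.
Proof. by rewrite !mxE; apply: eq_bigr => k _; rewrite !mxE. Qed.

Lemma Mid_last I K : Mid I K.+3 K.+1 = I K.+1.
Proof. by rewrite /Mid big_nat1. Qed.
Unset Implicit Arguments.
Theorem mainTheorem1 (R : realType) (N : nat) (hN : (3 <= N)%N)
  (I : nat -> nat) (X : tensor R I N) (Om : {set 'I_(P I N.-1)})
  (* the collections of slices p_1, ..., p_{L_n} used at level n *)
  (ps : nat -> seq nat)
  (* bases N_obs^(n,l) of the orthogonal complements *)
  (Nobs : forall n p : nat, 'M[R]_(#|obs Om n p|, #|obs Om n p| - ttrank X n))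
  (* choices made by the procedure: A^(n) (step 1) and V^(N-1) (step 4) *)
  (A : forall n : nat, 'M[R]_(P I n, ttrank X n))
  (V : 'M[R]_(Q I N N.-1, ttrank X N.-1)) :
  (* (i)-(ii) *)
  (forall n, (1 <= n <= N - 2)%N -> all (fun p => (p < Mid I N n)%N) (ps n)) ->
  (forall n, (1 <= n <= N - 2)%N -> forall p, p \in ps n ->
     \rank (Mobs X Om n p) = ttrank X n) ->
  (forall n, (1 <= n <= N - 2)%N -> forall p, p \in ps n ->
     ((Nobs n p)^T == kermx (Mobs X Om n p))%MS /\ row_free (Nobs n p)^T) ->
  (forall n, (1 <= n <= N - 2)%N ->
     \rank (kermx (Nmat Om n (ttrank X n) (ps n) (Nobs n))) = ttrank X n) ->
  (* (iii) *)
  (forall i, (i < I (N - 2)%N)%N ->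
     forall U : 'M[R]_(P I (N - 2)%N, ttrank X (N - 2)%N),
       ((U^T == (unfold X (N - 2)%N)^T)%MS /\ row_free U^T) ->
       \rank (rowsel (obs Om (N - 2)%N i) *m U) = ttrank X (N - 2)%N) ->
  (* (iv) *)
  (ttrank X N.-1 <= \rank (rowsel Om *m unfold X N.-1))%N ->
  (* step (1): A^(n) has orthonormal columns spanning ker(N^(n)^T) *)
  (forall n, (1 <= n <= N - 2)%N ->
     (A n)^T *m A n = 1%:M /\
     ((A n)^T == kermx (Nmat Om n (ttrank X n) (ps n) (Nobs n)))%MS) ->
  (* step (4): V^(N-1) = top right singular vectors of S_r X_[1..N-1;N] *)
  top_rsv (rowsel Om *m unfold X N.-1) (ttrank X N.-1) V ->
  (* step (5): each linear system has a unique solution ... *)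
  (forall i, (i < I (N - 2)%N)%N ->
     exists! Y : 'M[R]_(ttrank X (N - 2)%N, ttrank X N.-1),
       rowsel (obs Om (N - 2)%N i) *m (slice X (N - 2)%N i *m V)
       = (rowsel (obs Om (N - 2)%N i) *m Gpre N A) *m Y) /\
  (* ... and the resulting cores reproduce X exactly *)
  (forall Gl : nat -> 'M[R]_(ttrank X (N - 2)%N, ttrank X N.-1),
     (forall i, (i < I (N - 2)%N)%N ->
        rowsel (obs Om (N - 2)%N i) *m (slice X (N - 2)%N i *m V)
        = (rowsel (obs Om (N - 2)%N i) *m Gpre N A) *m Gl i) ->
     forall idx : nat -> nat, (forall j, (j < N)%N -> (idx j < I j)%N) ->
       tget X (flat I N idx)
       = ((\row_s mxn (Gpre N A) (flat I (N - 2)%N idx) s)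
            *m Gl (idx (N - 2)%N)
            *m (\col_b mxn V^T b (idx N.-1))) ord0 ord0).
Proof.
Proof.
move=> hps hrk hNobs hker hiii hiv hA htop.
have [K eN] : exists K, N = K.+3 by exists (N - 3)%N; lia.
subst N.
have hAU : forall n, (1 <= n <= K.+1)%N ->
    ((A n)^T <= (unfold X n)^T)%MS /\ ((unfold X n)^T <= (A n)^T)%MS.
  move=> n hn.
  have hsub : ((unfold X n)^T <= kermx (Nmat Om n (ttrank X n) (ps n) (Nobs n)))%MS.
    apply/sub_kermxP; rewrite /Nmat mul_mxrow.
    rewrite -mxrow0; apply: eq_mxrow => l.
    set p := nth 0%N (ps n) l.
    have hp : p \in ps n by apply: mem_nth.
    have hpm : (p < Mid I K.+3 n)%N by move/allP: (hps n hn) => /(_ p hp).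
    have hn2 : (n <= K.+2)%N by case/andP: hn => _ h; exact: leqW.
    have hsl := slice_sub X (ltn0Sn _) hn2 hpm.
    have hc := @colspan _ _ _ _ _ (rowsel (obs Om n p)) _ _ hsl (hrk n hn p hp).
    case/submxP: hc => D hD.
    have hk0 : (Nobs n p)^T *m Mobs X Om n p = 0.
      by apply/sub_kermxP; case/andP: (hNobs n hn p hp).1.
    have hk1 : (rowsel (obs Om n p) *m slice X n p)^T *m Nobs n p = 0.
      by rewrite -[Nobs n p]trmxK -trmx_mul hk0 trmx0.
    by rewrite mulmxA -trmx_mul hD -mulmxA hk1 mulmx0.
  have hkU : (kermx (Nmat Om n (ttrank X n) (ps n) (Nobs n)) <= (unfold X n)^T)%MS.
    by rewrite -(mxrank_leqif_sup hsub).2 hker // mxrank_tr.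
  case/andP: (hA n hn).2 => h1 h2.
  by split; [exact: submx_trans h1 hkU | exact: submx_trans hsub h2].
have hAA : forall n, (1 <= n <= K.+1)%N -> (A n)^T *m A n = 1%:M.
  by move=> n hn; case: (hA n hn).
have hBsub : forall n i, (1 <= n)%N -> (n.+1 <= K.+1)%N -> (i < I n)%N ->
    ((\matrix_(r < P I n, s < ttrank X n.+1) mxn (A n.+1) (r + P I n * i) s)^T
       <= (A n)^T)%MS.
  move=> n i h1 h2 hi.
  have hn1 : (n.+1 < K.+3)%N by lia.
  apply: submx_trans (B_sub hn1 hi (hAU n.+1 _).1) (hAU n _).2.
    by apply/andP; split.
  by apply/andP; split => //; exact: ltnW.
have hG : Gpre K.+3 A = A K.+1.
  apply: Gpre_A; exact: (pre_row hAA hBsub (leqnn _)).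
have hrkM : \rank (rowsel Om *m unfold X K.+2) = ttrank X K.+2.
  by apply/eqP; rewrite eqn_leq hiv andbT; exact: mxrankM_maxr.
have [hMV hVV] := svd_sub htop hrkM.
have hUV : (unfold X K.+2 <= V^T)%MS.
  apply: submx_trans _ hMV.
  by rewrite -(mxrank_leqif_sup (submxMl (rowsel Om) (unfold X K.+2))).2 hrkM.
have hUVV : unfold X K.+2 *m V *m V^T = unfold X K.+2.
  case/submxP: hUV => C ->; rewrite -!mulmxA; congr (C *m _).
  by rewrite mulmxA hVV mul1mx.
have hK1 : (1 <= K.+1 <= K.+1)%N by rewrite leqnn.
have hSl : forall i, (i < I K.+1)%N ->
    A K.+1 *m ((A K.+1)^T *m slice X K.+1 i) = slice X K.+1 i.
  move=> i hi; apply: AAt (hAA _ hK1) _.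
  apply: submx_trans (hAU _ hK1).2.
  by apply: slice_sub => //; rewrite Mid_last.
have hSl2 : forall i, (i < I K.+1)%N ->
    A K.+1 *m ((A K.+1)^T *m (slice X K.+1 i *m V)) = slice X K.+1 i *m V.
  by move=> i hi; rewrite (mulmxA (A K.+1)^T) (mulmxA (A K.+1)) hSl.
have hSlV : forall i, (i < I K.+1)%N -> slice X K.+1 i *m V *m V^T = slice X K.+1 i.
  move=> i hi; have := @slice_row _ _ _ X K.+1 i (leqnSn _).
  rewrite Mid_last => /(_ hi) /submxP [C ->].
  by rewrite -!mulmxA (mulmxA _ V) hUVV.
have hfree : forall i, (i < I K.+1)%N ->
    row_free (rowsel (obs Om K.+1 i) *m A K.+1)^T.
  move=> i hi; rewrite /row_free mxrank_tr; apply/eqP; apply: hiii => //.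
  split; first by apply/andP; split; [exact: (hAU _ hK1).1 | exact: (hAU _ hK1).2].
  rewrite /row_free eqn_leq rank_leq_row /=.
  by have := mxrankM_maxl (A K.+1)^T (A K.+1); rewrite hAA // mxrank1.
have huniq : forall i, (i < I K.+1)%N -> forall Y,
    rowsel (obs Om K.+1 i) *m (slice X K.+1 i *m V)
      = (rowsel (obs Om K.+1 i) *m Gpre K.+3 A) *m Y ->
    Y = (A K.+1)^T *m (slice X K.+1 i *m V).
  move=> i hi Y hY; apply: trmx_inj; apply: (row_free_inj (hfree i hi)).
  by rewrite -!trmx_mul -hG -hY -mulmxA hG hSl2.
split.
  move=> i hi; exists ((A K.+1)^T *m (slice X K.+1 i *m V)); split.
    by rewrite hG -mulmxA hSl2.
  by move=> Y hY; rewrite (huniq i hi Y hY).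
move=> Gl hGl idx hidx.
have hi : (idx K.+1 < I K.+1)%N by apply: hidx.
have hfl : (flat I K.+1 idx < P I K.+1)%N.
  by apply: flat_lt => j hj; apply: hidx; lia.
have hc : (idx K.+2 < Q I K.+3 K.+2)%N by rewrite Q_last //; apply: hidx.
change (flat I (K.+3 - 2) idx) with (flat I K.+1 idx).
change (idx (K.+3 - 2)%N) with (idx K.+1).
change (idx K.+3.-1) with (idx K.+2).
rewrite hG (mxn_row _ hfl) (mxn_col _ hc) -row_mul row_col_entry.
rewrite (huniq _ hi _ (hGl _ hi)) hSl2 // hSlV // mxE.
congr (tget X _); rewrite /= (flat_S _ K.+2) (flat_S _ K.+1); lia.
Qed.
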